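(* Let $\kappa$ be a regular uncountable cardinal with $\kappa^{<\kappa}=\kappa$ and $\gamma^\omega<\kappa$ for all $\gamma<\kappa$, and let $I$ be the linear order described in the context. Then $I$ is $(\kappa,bs,bs)$-nice.
   Context: $I^0$: order $\kappa\times\mathbb Q$ lexicographically; $I^0$ is the set of $f:\omega\to\kappa\times\mathbb Q$, $f(n)=(f_1(n),f_2(n))$, with $\{n\mid f_1(n)\ne0\}$ finite, ordered by comparing at the least $n$ where they differ. Construct $I^0\subseteq I^1\subseteq\dots$ ($i<\kappa$): given $I^i$, for each $\nu\in I^i$ add a new element $\nu^{i+1}$ with $\nu^{i+1}<\nu$ and, for all $\tau\in I^i\setminus\{\nu\}$, $\tau<\nu^{i+1}$ iff $\tau<\nu$ (for distinct $\nu,\mu$, $\nu^{i+1}<\mu^{i+1}$ iff $\nu<\mu$); $I^{i+1}=I^i\cup\{\nu^{i+1}\mid\nu\in I^i\}$; unions at limits; $I=\bigcup_{i<\kappa}I^i$. Types: $tp_{bs}(a,B,A)$ is the set of atomic and negated atomic formulas (in $\{<\}$) with parameters in $B$ true of $a$. A $\kappa$-representation of $A$ is an increasing continuous sequence $\langle A_\alpha\mid\alpha<\kappa\rangle$ of subsets of size $<\kappa$ with union $A$. $tp_{bs}(a,B,A)$ $(bs,bs)$-splits over $D$ if there are $b_1,b_2\in B$ with $tp_{bs}(b_1,D,A)=tp_{bs}(b_2,D,A)$ but $tp_{bs}(a^\frown b_1,D,A)\ne tp_{bs}(a^\frown b_2,D,A)$. $Sp_{bs}(\mathbb A)$ is the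 set of limit $\delta<\kappa$ such that some $a\in A$ has $tp_{bs}(a,A_\delta,A)$ $(bs,bs)$-splitting over $A_\beta$ for all $\beta<\delta$. $A$ is $(\kappa,bs,bs)$-nice if $Sp_{bs}(\mathbb A)$ is non-stationary for a (equivalently every) $\kappa$-representation $\mathbb A$ of $A$. *)

(* Defs.v *)
From mathcomp Require Import all_boot all_order all_algebra.
From Stdlib Require Import List.
Set Implicit Arguments. Unset Strict Implicit. Unset Printing Implicit Defensive.
Import Order.TTheory GRing.Theory Num.Theory.

(* The cardinal kappa, represented by a type K with a strict well-order
   [lt] whose order type is kappa (K = the set of ordinals < kappa).   *)
Section Kappa.
Variables (K : Type) (lt : K -> K -> Prop).

Definition le (a b : K) : Prop := lt a b \/ a = b.

Definition strict_well_order : Prop :=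
  well_founded lt /\
  (forall a b c, lt a b -> lt b c -> lt a c) /\
  (forall a, ~ lt a a) /\
  (forall a b, lt a b \/ a = b \/ lt b a).

Definition card_lt_kappa (U : Type) (X : U -> Prop) : Prop :=
  ~ exists f : K -> U, (forall k, X (f k)) /\ (forall a b, f a = f b -> a = b).

Definition is_cardinal : Prop := forall i : K, card_lt_kappa (fun j => lt j i).

Definition uncountable : Prop :=
  ~ exists f : K -> nat, forall a b, f a = f b -> a = b.

Definition regular : Prop :=
  forall S : K -> Prop, card_lt_kappa S -> exists b, forall x, S x -> lt x b.

Definition pow_lt_kappa_eq_kappa : Prop :=
  forall i : K, exists g : ({j : K | lt j i} -> K) -> K,
    forall f1 f2, g f1 = g f2 -> f1 = f2.

Definition pow_omega_lt_kappa : Prop :=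
  forall i : K,
    ~ exists f : K -> (nat -> K),
        (forall k n, lt (f k n) i) /\ (forall a b, f a = f b -> a = b).

Definition is_limit (d : K) : Prop :=
  (exists b, lt b d) /\ (forall b, lt b d -> exists c, lt b c /\ lt c d).

Definition club (C : K -> Prop) : Prop :=
  (forall a, exists b, C b /\ le a b) /\
  (forall d, is_limit d ->
     (forall a, lt a d -> exists b, C b /\ lt a b /\ lt b d) -> C d).

Definition stationary (S : K -> Prop) : Prop :=
  forall C, club C -> exists d, C d /\ S d.

(* Basic types (atomic / negated atomic formulas in {<} with equality) *)
Section Types.
Variables (U : Type) (R : U -> U -> Prop).

Inductive term := Var of nat | Par of U.
Inductive atom := ALt of term & term | AEq of term & term.
Inductive literal := Pos of atom | Neg of atom.

Definition teval (ab : list U) (t : term) : option U :=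
  match t with Var n => nth_error ab n | Par u => Some u end.

Definition aholds (ab : list U) (a : atom) : Prop :=
  match a with
  | ALt t1 t2 => match teval ab t1, teval ab t2 with
                 | Some u, Some v => R u v | _, _ => False end
  | AEq t1 t2 => match teval ab t1, teval ab t2 with
                 | Some u, Some v => u = v | _, _ => False end
  end.

Definition lholds (ab : list U) (l : literal) : Prop :=
  match l with Pos a => aholds ab a | Neg a => ~ aholds ab a end.

Definition term_ok (ab : list U) (B : U -> Prop) (t : term) : Prop :=
  match t with Var n => (n < size ab)%N | Par u => B u end.

Definition atom_ok ab B (a : atom) : Prop :=
  match a with ALt t1 t2 | AEq t1 t2 => term_ok ab B t1 /\ term_ok ab B t2 end.

Definition lit_ok ab B (l : literal) : Prop :=
  match l with Pos a | Neg a => atom_ok ab B a end.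

Definition tp_bs (ab : list U) (B : U -> Prop) : literal -> Prop :=
  fun l => lit_ok ab B l /\ lholds ab l.

Definition same_set (P Q : literal -> Prop) : Prop := forall l, P l <-> Q l.

Definition bs_splits (a : U) (B D : U -> Prop) : Prop :=
  exists b1 b2, B b1 /\ B b2 /\
    same_set (tp_bs [:: b1] D) (tp_bs [:: b2] D) /\
    ~ same_set (tp_bs [:: a; b1] D) (tp_bs [:: a; b2] D).

Definition kappa_rep (A : U -> Prop) (As : K -> U -> Prop) : Prop :=
  (forall a u, As a u -> A u) /\
  (forall a, card_lt_kappa (As a)) /\
  (forall a b, le a b -> forall u, As a u -> As b u) /\
  (forall d, is_limit d -> forall u, As d u <-> exists a, lt a d /\ As a u) /\
  (forall u, A u <-> exists a, As a u).

Definition Sp_bs (A : U -> Prop) (As : K -> U -> Prop) : K -> Prop :=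
  fun d => is_limit d /\
    exists a, A a /\ forall b, lt b d -> bs_splits a (As d) (As b).

Definition nice (A : U -> Prop) : Prop :=
  forall As, kappa_rep A As -> ~ stationary (Sp_bs A As).

End Types.

Definition isZero (k : K) : Prop := forall j, ~ lt j k.

Definition I0_mem (f : nat -> K * rat) : Prop :=
  exists N, forall n, (N <= n)%N -> isZero (f n).1.

Definition lexKQ (p q : K * rat) : Prop :=
  lt p.1 q.1 \/ (p.1 = q.1 /\ (p.2 < q.2)%R).

Definition I0_lt (f g : nat -> K * rat) : Prop :=
  exists n, (forall m, (m < n)%N -> f m = g m) /\ lexKQ (f n) (g n).

(* An element of I is (x, [i_k; ...; i_1]) with x in I^0 and
   i_1 < ... < i_k, standing for (...(x^{i_1+1})...)^{i_k+1}. *)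
Definition Ielt := ((nat -> K * rat) * list K)%type.

Fixpoint all_below (i : K) (s : list K) : Prop :=
  match s with nil => True | j :: s' => lt j i /\ all_below i s' end.

Fixpoint decr (s : list K) : Prop :=
  match s with nil => True | i :: s' => all_below i s' /\ decr s' end.

Definition I_mem (e : Ielt) : Prop := I0_mem e.1 /\ decr e.2.

(* the order, following the construction of I^{i+1} from I^i;
   below i t  <->  (y,t) belongs to I^i *)
Inductive I_lt : Ielt -> Ielt -> Prop :=
| Ilt_base x y : I0_lt x y -> I_lt (x, nil) (y, nil)
| Ilt_copy_orig x i s : I_lt (x, i :: s) (x, s)
| Ilt_copy_other x i s y t :
    all_below i t -> (y, t) <> (x, s) -> I_lt (x, s) (y, t) ->
    I_lt (x, i :: s) (y, t)
| Ilt_other_copy x i s y t :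
    all_below i t -> (y, t) <> (x, s) -> I_lt (y, t) (x, s) ->
    I_lt (y, t) (x, i :: s)
| Ilt_copies x s y t i :
    I_lt (x, s) (y, t) -> I_lt (x, i :: s) (y, i :: t).

End Kappa.

(* Main.v *)
Require Import Defs.
From mathcomp Require Import all_boot all_order all_algebra.
From Stdlib Require Import ClassicalEpsilon FunctionalExtensionality Lia.
Set Implicit Arguments. Unset Strict Implicit. Unset Printing Implicit Defensive.
Import Order.TTheory GRing.Theory Num.Theory.

Section Ty.
Variables (U : Type) (R : U -> U -> Prop).

Lemma tp_facts (D : U -> Prop) b1 b2 :
  same_set (tp_bs R [:: b1] D) (tp_bs R [:: b2] D) ->
  (R b1 b1 <-> R b2 b2) /\
  forall d, D d -> (R d b1 <-> R d b2) /\ (R b1 d <-> R b2 d) /\ (d = b1 <-> d = b2).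
Proof.
move=> H; have o1 : (0 < 1)%N by [].
split.
  have := H (Pos (ALt (Var U 0) (Var U 0))); rewrite /tp_bs /=; tauto.
move=> d hd; split; [|split].
- have := H (Pos (ALt (Par d) (Var U 0))); rewrite /tp_bs /=; tauto.
- have := H (Pos (ALt (Var U 0) (Par d))); rewrite /tp_bs /=; tauto.
- have := H (Pos (AEq (Par d) (Var U 0))); rewrite /tp_bs /=; tauto.
Qed.

Lemma no_split a (B D : U -> Prop) :
  (forall b1 b2, B b1 -> B b2 -> same_set (tp_bs R [:: b1] D) (tp_bs R [:: b2] D) ->
     (R a b1 <-> R a b2) /\ (R b1 a <-> R b2 a) /\ (a = b1 <-> a = b2)) ->
  ~ bs_splits R a B D.
Proof.
move=> H [b1 [b2 [hb1 [hb2 [hs hn]]]]]; apply: hn.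
have [Hab [Hba Heq]] := H _ _ hb1 hb2 hs.
have [Hbb Hd] := tp_facts hs.
have Hd' : forall d, D d -> (R d b1 <-> R d b2) /\ (R b1 d <-> R b2 d) /\ (d = b1 <-> d = b2) /\ (b1 = d <-> b2 = d).
  move=> d hd; have [? [? e]] := Hd d hd; do 3!(split => //); split => h; apply/esym/e/esym => //.
clear Hd; rename Hd' into Hd.
have Heq' : b1 = a <-> b2 = a by split => e; apply/esym/Heq.
have o1 : (0 < 2)%N by []. have o2 : (1 < 2)%N by [].
move=> l; rewrite /tp_bs.
have nn : forall n, List.nth_error ([::] : list U) n = None by case.
case: l => [] [] t1 t2; case: t1 => [[|[|n]]|d]; case: t2 => [[|[|n']]|d'] /=; rewrite ?nn;
  try tauto;
  try (split; move=> [[h1 h2] h3]; (have := Hd _ h1) || (have := Hd _ h2); tauto).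
all: try (split; move=> [h1 h2]; (have := Hd _ h1) || (have := Hd _ h2); tauto).
Qed.

End Ty.

Section Main.
Variables (K : Type) (lt : K -> K -> Prop).
Hypothesis Hwo : strict_well_order lt.
Hypothesis Hcard : is_cardinal lt.
Hypothesis Hunc : uncountable K.
Hypothesis Hreg : regular lt.
Hypothesis Hpow : pow_lt_kappa_eq_kappa lt.
Hypothesis Hom : pow_omega_lt_kappa lt.

Lemma ltT a b c : lt a b -> lt b c -> lt a c.
Proof. by case: Hwo => _ [H _]; apply: H. Qed.
Lemma ltI a : ~ lt a a.
Proof. by case: Hwo => _ [_ [H _]]. Qed.
Lemma ltTri a b : lt a b \/ a = b \/ lt b a.
Proof. by case: Hwo => _ [_ [_ H]]. Qed.
Lemma ltA a b : lt a b -> lt b a -> False.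
Proof. move=> h1 h2; exact: (ltI (ltT h1 h2)). Qed.
Lemma lt_wf : well_founded lt.
Proof. by case: Hwo. Qed.

Lemma nlt_le a b : ~ lt a b -> b = a \/ lt b a.
Proof. move=> h; case: (ltTri a b) => [//|[->|]]; tauto. Qed.

Lemma wf_min (P : K -> Prop) : (exists x, P x) -> exists x, P x /\ forall y, P y -> ~ lt y x.
Proof.
move=> [x Px]; move: x Px; apply: (well_founded_ind lt_wf (fun x => P x -> _)).
move=> x IH Px; case: (classic (exists y, P y /\ lt y x)) => [[y [Py ly]]|nh].
  exact: IH ly Py.
by exists x; split => // y Py ly; apply: nh; exists y.
Qed.

Lemma K_inh : inhabited K.
Proof.
apply: NNPP => nh; apply: Hunc; exists (fun _ => 0) => a; exfalso; apply: nh; exact: inhabits a.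
Qed.

Lemma zero_ex : exists z, isZero lt z.
Proof.
case: K_inh => k.
have [z [_ Hz]] := @wf_min (fun _ => True) (ex_intro _ k I).
by exists z => j hj; apply: (Hz j).
Qed.

Definition z0 : K := epsilon K_inh (isZero lt).
Lemma z0P : isZero lt z0.
Proof. exact: (epsilon_spec K_inh _ zero_ex). Qed.

Lemma zero_le z k : isZero lt z -> k = z \/ lt z k.
Proof. move=> hz; case: (ltTri k z) => [h|]; [by case: (hz k)|tauto]. Qed.

Lemma zero_uniq z z' : isZero lt z -> isZero lt z' -> z = z'.
Proof. move=> h h'; case: (zero_le z' h) => // /h' []. Qed.

Lemma card_countable (T : nat -> K) : card_lt_kappa K (fun k => exists n, k = T n).
Proof.
move=> [f [Hf Hinj]]; apply: Hunc.
exists (fun k => proj1_sig (constructive_indefinite_description _ (Hf k))) => a b.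
case: (constructive_indefinite_description _ (Hf a)) => na ea.
case: (constructive_indefinite_description _ (Hf b)) => nb eb /= e.
by apply: Hinj; rewrite ea eb e.
Qed.

Lemma bound_countable (T : nat -> K) : exists b, forall n, lt (T n) b.
Proof.
have [b Hb] := Hreg (@card_countable T).
by exists b => n; apply: Hb; exists n.
Qed.

Lemma bound2 a b : exists c, lt a c /\ lt b c.
Proof.
have [c Hc] := bound_countable (fun n => if n is 0 then a else b).
by exists c; split; [apply: (Hc 0)|apply: (Hc 1)].
Qed.

Lemma image_small (U : Type) (X : U -> Prop) (f : U -> K) :
  card_lt_kappa K X -> card_lt_kappa K (fun k => exists u, X u /\ k = f u).
Proof.
move=> HX [g [Hg Hinj]]; apply: HX.
exists (fun k => proj1_sig (constructive_indefinite_description _ (Hg k))); split.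
  by move=> k; case: (constructive_indefinite_description _ (Hg k)) => u [].
move=> a b.
case: (constructive_indefinite_description _ (Hg a)) => ua [Xa ea].
case: (constructive_indefinite_description _ (Hg b)) => ub [Xb eb] /= e.
by apply: Hinj; rewrite ea eb e.
Qed.

Lemma fibers (U : Type) (X : U -> Prop) (h : K -> U * nat) :
  (forall k, X (h k).1) -> (forall a b, h a = h b -> a = b) -> ~ card_lt_kappa K X.
Proof.
move=> HX Hinj HXs.
case: (classic (exists n, ~ card_lt_kappa K (fun k => (h k).2 = n))) => [[n Hn]|Hall].
  apply: Hn => -[g [Hg Hginj]]; apply: HXs.
  exists (fun k => (h (g k)).1); split => [k|a b e]; first exact: HX.
  apply: Hginj; apply: Hinj.
  by rewrite (surjective_pairing (h (g a))) (surjective_pairing (h (g b))) e Hg Hg.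
have Hb : forall n, exists b, forall k, (h k).2 = n -> lt k b.
  move=> n; apply: Hreg; exact: NNPP (fun c => Hall (ex_intro _ n c)).
pose b n := proj1_sig (constructive_indefinite_description _ (Hb n)).
have bP n : forall k, (h k).2 = n -> lt k (b n).
  by rewrite /b; case: (constructive_indefinite_description _ (Hb n)).
have [B HB] := bound_countable b.
exact: ltI (ltT (bP _ B erefl) (HB _)).
Qed.


Lemma nat_min (P : nat -> Prop) : (exists n, P n) -> exists n, P n /\ forall m, (m < n)%N -> ~ P m.
Proof.
move=> [n Pn]; elim: n {-2}n (leqnn n) Pn => [|N IH] n hn Pn.
  exists n; split => // m; move: hn; rewrite leqn0 => /eqP ->. by [].
case: (classic (exists m, (m < n)%N /\ P m)) => [[m [hm Pm]]|nh].
  apply: (IH m) => //; by rewrite -ltnS (leq_trans hm hn).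
by exists n; split => // m hm Pm; apply: nh; exists m.
Qed.

Lemma lexKQ_irr p : ~ lexKQ lt p p.
Proof. case=> [/ltI //|[_]]; by rewrite Order.POrderTheory.ltxx. Qed.

Lemma lexKQ_trans p q r : lexKQ lt p q -> lexKQ lt q r -> lexKQ lt p r.
Proof.
case=> [h1|[e1 h1]] [h2|[e2 h2]].
- by left; apply: ltT h1 h2.
- by left; rewrite -e2.
- by left; rewrite e1.
- by right; split; [rewrite e1|apply: Order.POrderTheory.lt_trans h1 h2].
Qed.

Lemma lexKQ_tri p q : p <> q -> lexKQ lt p q \/ lexKQ lt q p.
Proof.
case: p q => a r [b s] /= ne.
case: (ltTri a b) => [h|[e|h]]; [by left; left|subst b|by right; left].
have ne' : r != s by apply/eqP => e; apply: ne; rewrite e.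
case/orP: (Order.TotalTheory.lt_total ne') => h; [left|right]; right; by split.
Qed.

Lemma I0_irr x : ~ I0_lt lt x x.
Proof. by case=> n [_ /lexKQ_irr]. Qed.

Lemma I0_trans x y z : I0_lt lt x y -> I0_lt lt y z -> I0_lt lt x z.
Proof.
move=> [n1 [e1 h1]] [n2 [e2 h2]].
case: (ltngtP n1 n2) => c.
- exists n1; split; first by move=> m hm; rewrite e1 // e2 // (ltn_trans hm c).
  by rewrite -(e2 _ c).
- exists n2; split; first by move=> m hm; rewrite e1 ?(ltn_trans hm c) // e2.
  by rewrite (e1 _ c).
- subst n2; exists n1; split; first by move=> m hm; rewrite e1 // e2.
  exact: lexKQ_trans h1 h2.
Qed.

Lemma I0_asym x y : I0_lt lt x y -> I0_lt lt y x -> False.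
Proof. move=> h1 h2; exact: I0_irr (I0_trans h1 h2). Qed.

Lemma I0_tri x y : x <> y -> I0_lt lt x y \/ I0_lt lt y x.
Proof.
move=> ne.
have : exists n, x n <> y n.
  apply: NNPP => nh; apply: ne; apply: functional_extensionality => n.
  by apply: NNPP => h; apply: nh; exists n.
move=> /nat_min [n [hn hmin]].
have Heq m : (m < n)%N -> x m = y m by move=> hm; apply: NNPP; apply: hmin.
case: (lexKQ_tri hn) => h; [left|right]; exists n; split => // m hm; by rewrite Heq.
Qed.


Lemma all_below_cons_lt j i u : all_below lt j (i :: u) -> lt i j.
Proof. by case. Qed.

Ltac ab_contra ltI ltA :=
  repeat match goal with
         | H : all_below _ _ (_ :: _) |- _ => simpl in H
         | H : _ /\ _ |- _ => destruct H end;
  match goal with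
  | H : ?lt ?a ?a |- _ => exfalso; exact (ltI _ H)
  | H1 : ?lt ?a ?b, H2 : ?lt ?b ?a |- _ => exfalso; exact (ltA _ _ H1 H2)
  end.

Lemma L1 x j t y u : all_below lt j u -> (y, u) <> (x, t) ->
  (I_lt lt (x, j :: t) (y, u) <-> I_lt lt (x, t) (y, u)) /\
  (I_lt lt (y, u) (x, j :: t) <-> I_lt lt (y, u) (x, t)).
Proof.
move=> hab hne; split; split => H.
- inversion H; subst.
  + by case: hne.
  + done.
  + ab_contra ltI ltA.
  + ab_contra ltI ltA.
- by apply: Ilt_copy_other.
- inversion H; subst.
  + ab_contra ltI ltA.
  + ab_contra ltI ltA.
  + done.
  + ab_contra ltI ltA.
- by apply: Ilt_other_copy.
Qed.

Lemma L3 x y i s t : x <> y ->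
  (I_lt lt (x, i :: s) (y, i :: t) <-> I_lt lt (x, s) (y, t)).
Proof.
move=> ne; split => H; last exact: Ilt_copies.
inversion H; subst => //; ab_contra ltI ltA.
Qed.

Lemma base_inv x y : I_lt lt (x, nil) (y, nil) -> I0_lt lt x y.
Proof. by move=> H; inversion H. Qed.

Lemma all_below_trans i j u : lt i j -> all_below lt i u -> all_below lt j u.
Proof. move=> h; elim: u => //= a u IH [h1 h2]; split; [exact: ltT h1 h|exact: IH]. Qed.

Lemma L2 x y s t : decr lt s -> decr lt t -> x <> y ->
  (I_lt lt (x, s) (y, t) <-> I0_lt lt x y).
Proof.
move=> ds dt ne.
move: {2}(size s + size t)%N (leqnn (size s + size t)%N) => N.
elim: N s t ds dt => [|N IH] s t ds dt hN.
  case: s ds hN => [|? ?] //; case: t dt => [|? ?] //= _ _ _.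
  by split; [apply: base_inv|apply: Ilt_base].
case: s ds hN => [|i s] ds; case: t dt => [|j t] dt hN.
- by split; [apply: base_inv|apply: Ilt_base].
- have [_ ->] := L1 (x:=y) (j:=j) (t:=t) (y:=x) (u:=nil) I (fun e => ne (congr1 fst e)).
  apply: IH; try by [case: dt|case: ds|move: hN; rewrite /= ?addn0 ?add0n ?addSn ?addnS ?ltnS => // h; apply: leq_trans h; apply: leqnSn].
- have [-> _] := L1 (x:=x) (j:=i) (t:=s) (y:=y) (u:=nil) I (fun e => ne (esym (congr1 fst e))).
  apply: IH; try by [case: dt|case: ds|move: hN; rewrite /= ?addn0 ?add0n ?addSn ?addnS ?ltnS => // h; apply: leq_trans h; apply: leqnSn].
- case: (ltTri i j) => [h|[e|h]].
  + have hb : all_below lt j (i :: s) by split => //; case: ds => ds _; exact: all_below_trans h ds.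
    have [_ ->] := L1 (x:=y) (j:=j) (t:=t) (y:=x) (u:=i::s) hb (fun e => ne (congr1 fst e)).
    apply: IH; try by [case: dt|case: ds|move: hN; rewrite /= ?addn0 ?add0n ?addSn ?addnS ?ltnS => // h; apply: leq_trans h; apply: leqnSn].
  + subst j; rewrite L3 //; apply: IH; try by [case: dt|case: ds|move: hN; rewrite /= ?addn0 ?add0n ?addSn ?addnS ?ltnS => // h; apply: leq_trans h; apply: leqnSn].
  + have hb : all_below lt i (j :: t) by split => //; case: dt => dt _; exact: all_below_trans h dt.
    have [-> _] := L1 (x:=x) (j:=i) (t:=s) (y:=y) (u:=j::t) hb (fun e => ne (esym (congr1 fst e))).
    apply: IH; try by [case: dt|case: ds|move: hN; rewrite /= ?addn0 ?add0n ?addSn ?addnS ?ltnS => // h; apply: leq_trans h; apply: leqnSn].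
Qed.


Fixpoint none_below (d : K) (J : list K) : Prop :=
  match J with nil => True | j :: J' => ~ lt j d /\ none_below d J' end.

Lemma lt_nlt v d j : lt v d -> ~ lt j d -> lt v j.
Proof.
move=> h1 h2; case: (ltTri v j) => [//|[e|h]]; first by subst.
by case: h2; apply: ltT h h1.
Qed.

Lemma all_below_nlt d j u : all_below lt d u -> ~ lt j d -> all_below lt j u.
Proof. move=> h hj; elim: u h => //= v u IH [h1 h2]; split; [exact: lt_nlt h1 hj|exact: IH]. Qed.

Lemma not_copy_inv x s' j d : all_below lt d s' -> ~ lt j d ->
  ~ I_lt lt (x, s') (x, j :: s').
Proof.
move=> hs hj H; inversion H; subst.
all: repeat match goal with
         | H : all_below _ _ (_ :: _) |- _ => simpl in H
         | H : _ /\ _ |- _ => destruct H end.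
all: try match goal with E : ?s = _ :: _ :: ?s |- _ => have := f_equal size E; simpl; lia end.
all: try match goal with N : ?a <> ?a |- _ => exact: (N erefl) end.
all: try by apply: hj.
all: try by apply: hj; apply: ltT; eassumption.
Qed.

Lemma strip x s' d : all_below lt d s' -> forall J, none_below d J ->
  (forall y u, all_below lt d u -> (y, u) <> (x, s') ->
     (I_lt lt (x, J ++ s') (y, u) <-> I_lt lt (x, s') (y, u)) /\
     (I_lt lt (y, u) (x, J ++ s') <-> I_lt lt (y, u) (x, s'))) /\
  (J <> nil -> I_lt lt (x, J ++ s') (x, s') /\ ~ I_lt lt (x, s') (x, J ++ s')).
Proof.
move=> hs; elim=> [|j J IH] /=; first by split => //.
move=> [hj hJ]; have [IH1 IH2] := IH hJ; clear IH.
have ne1 : J <> nil -> (x, s') <> (x, J ++ s').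
  move=> hn [e]; apply: hn; move: (f_equal size e); rewrite size_cat.
  case: (J) => //= ? ? /eqP; by rewrite -{1}(add0n (size s')) eqn_add2r.
split.
- move=> y u hu hne.
  have hne' : (y, u) <> (x, J ++ s').
    move: hJ; case: J {IH1 IH2 ne1} => [|j' J'] hJ //= [_ eu]; subst u.
    by case: hu => /(proj1 hJ).
  have [A B] := L1 (x:=x) (j:=j) (t:=J ++ s') (all_below_nlt hu hj) hne'.
  have [A' B'] := IH1 y u hu hne.
  by rewrite A B A' B'.
- move=> _; case: J hJ IH1 IH2 ne1 => [|j' J'] hJ IH1 IH2 ne1 /=.
    by split; [apply: Ilt_copy_orig|apply: not_copy_inv hs hj].
  have [A B] := L1 (x:=x) (j:=j) (t:=j' :: J' ++ s') (all_below_nlt hs hj) (ne1 ltac:(done)).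
  rewrite A B; exact: IH2.
Qed.


Lemma le_lt_trans a b c : le lt a b -> lt b c -> lt a c.
Proof. by case=> [h1 h2|->] //; apply: ltT h1 h2. Qed.
Lemma lt_le_trans a b c : lt a b -> le lt b c -> lt a c.
Proof. by move=> h1 [h2|<-] //; apply: ltT h1 h2. Qed.

Definition inI (g : K) (e : Ielt K) : Prop :=
  I_mem lt e /\ (forall n, lt (e.1 n).1 g) /\ all_below lt g e.2.

Lemma all_below_nth g s : all_below lt g s <-> forall k, (k < size s)%N -> lt (nth z0 s k) g.
Proof.
elim: s => [|a s IH] /=; first by split => // _ [].
split.
  by move=> [h1 /IH h2] [|k] //= hk; apply: h2.
move=> h; split; first exact: (h 0%N).
by apply/IH => k hk; apply: (h k.+1).
Qed.

Lemma z1_ex : exists z1, lt z0 z1.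
Proof.
apply: NNPP => nh; apply: Hunc; exists (fun _ => 0) => a b _.
have Ha : a = z0.
  case: (zero_le a z0P) => // h; by case: nh; exists a.
have Hb : b = z0.
  case: (zero_le b z0P) => // h; by case: nh; exists b.
by rewrite Ha Hb.
Qed.

Definition z1 : K := epsilon K_inh (fun z => lt z0 z).
Lemma z1P : lt z0 z1.
Proof. exact: (epsilon_spec K_inh _ z1_ex). Qed.

Definition enc (e : Ielt K) (p : nat) : K :=
  match (unpickle p : option (nat * (nat * nat))) with
  | Some (0, (n, _)) => (e.1 n).1
  | Some (1, (n, k)) => if k == pickle (e.1 n).2 then z1 else z0
  | Some (2, (k, _)) => nth z0 e.2 k
  | Some (3, (k, _)) => if (k < size e.2)%N then z1 else z0
  | _ => z0
  end.

Lemma encE e t n k : enc e (pickle (t, (n, k))) =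
  match t with
  | 0 => (e.1 n).1
  | 1 => if k == pickle (e.1 n).2 then z1 else z0
  | 2 => nth z0 e.2 n
  | 3 => if (n < size e.2)%N then z1 else z0
  | _ => z0
  end.
Proof. by rewrite /enc pickleK; case: t => [|[|[|[|t]]]]. Qed.

Lemma z01 : z1 <> z0.
Proof. move=> e; apply: (ltI (a:=z0)); rewrite -{2}e; exact: z1P. Qed.

Lemma ite_z b1 b2 : (if b1 then z1 else z0) = (if b2 then z1 else z0) -> b1 = b2.
Proof. by case: b1; case: b2 => // e; [case: z01|case: z01]. Qed.

Lemma list_ext (s s' : list K) : size s = size s' ->
  (forall k, nth z0 s k = nth z0 s' k) -> s = s'.
Proof.
elim: s s' => [|a s IH] [|b s'] //= [hs] h.
by have := h 0%N; rewrite /= => ->; rewrite (IH s' hs (fun k => h k.+1)).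
Qed.

Lemma enc_inj e e' : enc e = enc e' -> e = e'.
Proof.
case: e e' => x s [x' s'] H.
have H0 n : (x n).1 = (x' n).1 by have := f_equal (fun f => f (pickle (0, (n, 0)))) H; rewrite !encE.
have H1 n : (x n).2 = (x' n).2.
  have := f_equal (fun f => f (pickle (1, (n, pickle (x n).2)))) H; rewrite !encE /=.
  move/ite_z; rewrite eqxx => /esym/eqP e; exact: (pcan_inj (@pickleK _) e).
have H3 k : (k < size s)%N = (k < size s')%N.
  by have := f_equal (fun f => f (pickle (3, (k, 0)))) H; rewrite !encE /= => /ite_z.
have Hs : size s = size s'.
  apply/eqP; rewrite eqn_leq; apply/andP; split; rewrite leqNgt; apply/negP => h.
    by move: (H3 (size s')); rewrite h ltnn.
  by move: (H3 (size s)); rewrite h ltnn.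
have H2 k : nth z0 s k = nth z0 s' k by have := f_equal (fun f => f (pickle (2, (k, 0)))) H; rewrite !encE.
have -> : x = x' by apply: functional_extensionality => n; rewrite [x n]surjective_pairing [x' n]surjective_pairing H0 H1.
by rewrite (list_ext Hs H2).
Qed.

Lemma factA g : card_lt_kappa K (inI g).
Proof.
move=> [f [Hf Hinj]].
have [i [hgi hz1i]] := bound2 g z1.
have hz0i : lt z0 i := ltT z1P hz1i.
apply: (Hom (i:=i)); exists (fun k => enc (f k)); split; last first.
  by move=> a b /enc_inj /Hinj.
move=> k n; rewrite /enc; case: (unpickle n) => [[t [a b]]|] //.
have [_ [hx hs]] := Hf k.
case: t => [|[|[|[|t]]]] //.
- exact: ltT (hx a) hgi.
- by case: ifP.
- case: (ltnP a (size (f k).2)) => h; first by apply: ltT hgi; move/all_below_nth: hs; apply.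
  by rewrite nth_default.
- by case: ifP.
Qed.


Lemma inI_mono g g' e : lt g g' -> inI g e -> inI g' e.
Proof. move=> h [h1 [h2 h3]]; split => //; split; [move=> n; exact: ltT (h2 n) h|exact: all_below_trans h h3]. Qed.

Lemma above v d : is_limit lt d -> lt v d -> exists g, lt v g /\ lt g d.
Proof. by move=> [_ H] /H. Qed.

Lemma max2 a b d : lt a d -> lt b d -> exists g, lt g d /\ le lt a g /\ le lt b g.
Proof.
move=> ha hb; case: (ltTri a b) => [h|[<-|h]].
- by exists b; split => //; split; [left|right].
- by exists a; split => //; split; right.
- by exists a; split => //; split; [right|left].
Qed.

Lemma fin_bound d (f : nat -> K) n : is_limit lt d -> (forall k, (k < n)%N -> lt (f k) d) ->
  exists g, lt g d /\ forall k, (k < n)%N -> lt (f k) g.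
Proof.
move=> hd; elim: n => [|n IH] H.
  by have [[b hb] _] := hd; exists b.
have [g1 [hg1 H1]] := IH (fun k hk => H k (ltnW hk)).
have [g2 [hv hg2]] := above hd (H n (ltnSn n)).
have [g [hg [l1 l2]]] := max2 hg1 hg2.
exists g; split => // k; rewrite ltnS leq_eqVlt => /orP [/eqP ->|hk].
  exact: lt_le_trans hv l2.
exact: lt_le_trans (H1 k hk) l1.
Qed.

Lemma inI_bound d e : is_limit lt d -> inI d e -> exists g, lt g d /\ inI g e.
Proof.
move=> hd [hm [hx hs]].
have [N HN] := proj1 hm.
have hz : lt z0 d.
  have [[b hb] _] := hd; case: (zero_le b z0P) => [<-|h] //; exact: ltT h hb.
pose f k := if (k < N)%N then (e.1 k).1 else if (k - N < size e.2)%N then nth z0 e.2 (k - N) else z0.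
have Hf : forall k, (k < (N + size e.2).+1)%N -> lt (f k) d.
  move=> k _; rewrite /f; case: ifP => // _; case: ifP => // h.
  by move/all_below_nth: hs; apply.
have [g [hg Hg]] := @fin_bound d f (N + size e.2).+1 hd Hf.
exists g; split => //; split => //; split.
- move=> n; case: (ltnP n N) => h.
    by have := Hg n (ltn_trans (leq_trans h (leq_addr _ _)) (ltnSn _)); rewrite /f h.
  have := Hg (N + size e.2) (ltnSn _); rewrite /f ltnNge leq_addr /= addKn ltnn.
  by rewrite (zero_uniq (HN n h) z0P).
- apply/all_below_nth => k hk.
  have := Hg (N + k) ltac:(by rewrite ltnS leq_add2l ltnW).
  by rewrite /f ltnNge leq_addr /= addKn hk.
Qed.

Section Rep.
Variable As : K -> Ielt K -> Prop.
Hypothesis HAs : kappa_rep lt (I_mem lt) As.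

Lemma As_mem a e : As a e -> I_mem lt e.
Proof. by case: HAs => H _; apply: H. Qed.
Lemma As_small a : card_lt_kappa K (As a).
Proof. by case: HAs => _ [H _]. Qed.
Lemma As_mono a b e : le lt a b -> As a e -> As b e.
Proof. by case: HAs => _ [_ [H _]] h; apply: H. Qed.
Lemma As_cont d e : is_limit lt d -> As d e <-> exists a, lt a d /\ As a e.
Proof. by case: HAs => _ [_ [_ [H _]]] h; apply: H. Qed.
Lemma As_union e : I_mem lt e <-> exists a, As a e.
Proof. by case: HAs => _ [_ [_ [_ H]]]. Qed.

Lemma factB b : exists g, forall e, As b e -> inI g e.
Proof.
pose S a := exists e, As b e /\ exists p, a = enc e p.
have HS : card_lt_kappa K S.
  move=> [f [Hf Hinj]].
  have Hf' k : exists ep : Ielt K * nat, As b ep.1 /\ f k = enc ep.1 ep.2.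
    by have [e [He [p hp]]] := Hf k; exists (e, p).
  pose h k := proj1_sig (constructive_indefinite_description _ (Hf' k)).
  apply: (@fibers _ (As b) h).
  - by move=> k; rewrite /h; case: (constructive_indefinite_description _ (Hf' k)) => ep [].
  - move=> a c; rewrite /h.
    case: (constructive_indefinite_description _ (Hf' a)) => ea [Ha Ea].
    case: (constructive_indefinite_description _ (Hf' c)) => ec [Hc Ec] /= E.
    by apply: Hinj; rewrite Ea Ec E.
  - exact: As_small.
have [g Hg] := Hreg HS.
exists g => e He; split; first exact: As_mem He.
split.
  move=> n; apply: Hg; exists e; split => //; exists (pickle (0, (n, 0))); by rewrite encE.
apply/all_below_nth => k hk; apply: Hg; exists e; split => //.
by exists (pickle (2, (k, 0))); rewrite encE.
Qed.

Definition pick (e : Ielt K) : K := epsilon K_inh (fun b => As b e).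

Lemma factC g : exists b, forall e, inI g e -> As b e.
Proof.
have [b Hb] := Hreg (image_small (f:=pick) (factA (g:=g))).
exists b => e He.
have : As (pick e) e.
  apply: (epsilon_spec K_inh (fun b => As b e)); apply/As_union; by case: He.
apply: As_mono; left; apply: Hb; by exists e.
Qed.

Lemma F_ex a : exists b, (forall e, inI a e -> As b e) /\ (forall e, As a e -> inI b e).
Proof.
have [b1 H1] := factC a; have [g2 H2] := factB a.
have [c [h1 h2]] := bound2 b1 g2.
exists c; split => e He.
  by apply: As_mono (H1 _ He); left.
exact: inI_mono h2 (H2 _ He).
Qed.

Definition F (a : K) : K := epsilon K_inh
  (fun b => (forall e, inI a e -> As b e) /\ (forall e, As a e -> inI b e)).
Lemma FP a : (forall e, inI a e -> As (F a) e) /\ (forall e, As a e -> inI (F a) e).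
Proof. exact: (epsilon_spec K_inh _ (F_ex a)). Qed.

Definition Cl (d : K) : Prop := is_limit lt d /\ forall a, lt a d -> lt (F a) d.

Lemma G_ex a : exists b, lt a b /\ forall g, lt g a -> lt (F g) b.
Proof.
have [b0 Hb0] := Hreg (image_small (f:=F) (Hcard (i:=a))).
have [c [h1 h2]] := bound2 a b0.
exists c; split => // g hg; apply: ltT h2; apply: Hb0; by exists g.
Qed.

Definition G (a : K) : K := epsilon K_inh (fun b => lt a b /\ forall g, lt g a -> lt (F g) b).
Lemma GP a : lt a (G a) /\ forall g, lt g a -> lt (F g) (G a).
Proof. exact: (epsilon_spec K_inh _ (G_ex a)). Qed.

Lemma Cl_club : club lt Cl.
Proof.
split.
  move=> a; pose s n := iter n G a.
  have [B HB] := bound_countable s.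
  have [d [Hd Hmin]] := @wf_min (fun b => forall n, lt (s n) b) (ex_intro _ B HB).
  have key c : lt c d -> exists n, lt c (s n).
    move=> hc; have : ~ (forall n, lt (s n) c) by move=> h; exact: Hmin c h hc.
    move=> h; have [n hn] : exists n, ~ lt (s n) c.
      by apply: NNPP => nh; apply: h => n; apply: NNPP => h'; apply: nh; exists n.
    exists n.+1; rewrite /s iterS -/(s n).
    case: (nlt_le hn) => [->|h2]; first exact: (proj1 (GP _)).
    exact: ltT h2 (proj1 (GP _)).
  exists d; split; last by left; apply: (Hd 0%N).
  split; first split.
  - by exists a; apply: (Hd 0%N).
  - by move=> b /key [n hn]; exists (s n).
  - move=> g /key [n hn]; apply: ltT (Hd n.+1); rewrite /s iterS; exact: (proj2 (GP _)).
move=> d hd H; split => // g /H [b [[_ Hb] [hgb hbd]]].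
exact: ltT (Hb _ hgb) hbd.
Qed.

Lemma Cl_inI d : Cl d -> forall e, As d e <-> inI d e.
Proof.
move=> [hd hF] e; split.
  move/(As_cont e hd) => [a [ha Ha]].
  exact: inI_mono (hF _ ha) (proj2 (FP a) _ Ha).
move/(inI_bound hd) => [g [hg Hg]].
apply: As_mono (proj1 (FP g) _ Hg); left; exact: hF.
Qed.


Lemma decomp d s : decr lt s -> exists J s', s = J ++ s' /\ none_below d J /\ all_below lt d s'.
Proof.
elim: s => [|i r IH] /=; first by move=> _; exists nil, nil.
move=> [hr dr]; case: (classic (lt i d)) => hi.
  exists nil, (i :: r); split => //; split => //=; split => //; exact: all_below_trans hi hr.
have [J [s' [-> [h1 h2]]]] := IH dr.
by exists (i :: J), s'.
Qed.

Lemma decr_suffix J s' : decr lt (J ++ s') -> decr lt s'.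
Proof. by elim: J => //= j J IH [_ /IH]. Qed.

Lemma Cl_notSp d : Cl d -> ~ Sp_bs lt (I_lt lt) (I_mem lt) As d.
Proof.
move=> hC [hd [a [ha Hs]]].
have HI := Cl_inI hC.
case: (classic (inI d a)) => Ha.
  have [b [hb Hb]] := (As_cont a hd).1 ((HI a).2 Ha).
  apply: (no_split _ (Hs b hb)) => b1 b2 hb1 hb2 hs.
  by have [_ Hd] := tp_facts hs; apply: Hd.
have Hne : forall b, As d b -> a <> b by move=> b /HI hb e; apply: Ha; rewrite e.
case: a ha Ha Hs Hne => x s [hmx hds] Ha Hs Hne.
case: (classic (exists n, ~ lt (x n).1 d)) => Hx.
-
  have [n [hn hmin]] := nat_min Hx.
  have hz : lt z0 d.
    have [[b hb] _] := hd; case: (zero_le b z0P) => [<-|h] //; exact: ltT h hb.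
  have Hf : forall k, (k < n.+1)%N -> lt (if (k < n)%N then (x k).1 else z0) d.
    move=> k _; case: ifP => // h; apply: NNPP; exact: hmin.
  have [b0 [hb0 Hb0]] := fin_bound hd Hf.
  have Hxb0 k : (k < n)%N -> lt (x k).1 b0.
    by move=> hk; have := Hb0 k (ltn_trans hk (ltnSn n)); rewrite hk.
  have hzb0 : lt z0 b0 by have := Hb0 n (ltnSn n); rewrite ltnn.
  pose be := F b0.
  have hbe : lt be d := proj2 hC _ hb0.
  have Hbe : forall e, inI b0 e -> As be e := proj1 (FP b0).
  have Hxy : forall y, (forall k, lt (y k).1 d) -> x <> y.
    by move=> y hy e; apply: hn; rewrite e.
  have key : forall b, As d b ->
      (I_lt lt (x, s) b <-> exists c, As be c /\ I_lt lt (x, s) c /\ I_lt lt c b).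
    move=> [y u] /HI [[_ du] [hy hu]].
    rewrite (L2 hds du (Hxy _ hy)); split.
    + move=> [m [hm hlex]].
      have hmn : (m < n)%N.
        rewrite ltnNge; apply/negP => hnm; apply: hn.
        move: hnm; rewrite leq_eqVlt => /orP [/eqP e|hnm].
          subst m; case: hlex => [h|[e _]]; [exact: ltT h (hy n)|rewrite e; exact: hy].
        by rewrite (hm _ hnm); apply: hy.
      have [r [hr1 hr2]] : exists r, lexKQ lt (x m) ((x m).1, r) /\ lexKQ lt ((x m).1, r) (y m).
        case: hlex => [h|[e h]].
          exists ((x m).2 + 1)%R; split; [right; split => //=; by rewrite Num.Theory.ltrDl|left => //].
        exists (((x m).2 + (y m).2) / 2)%R.
        have [m1 m2] := Num.Theory.midf_lt h.
        by split; right; split.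
      pose z k := if (k < m)%N then x k else if k == m then ((x m).1, r) else (z0, 0%R).
      have hz1 : I0_lt lt x z.
        exists m; split; first by move=> k hk; rewrite /z hk.
        by rewrite /z ltnn eqxx.
      have hz2 : I0_lt lt z y.
        exists m; split; first by move=> k hk; rewrite /z hk hm.
        by rewrite /z ltnn eqxx.
      have hzI : inI b0 (z, nil).
        split; [split => //|split => //].
          exists m.+1 => k hk; rewrite /z /= ltnNge (ltnW hk) /= (gtn_eqF hk); exact: z0P.
        move=> k /=; rewrite /z; case: ifP => [h|_]; first exact: Hxb0 (ltn_trans h hmn).
        by case: ifP => // _; apply: Hxb0.
      exists (z, nil); split; first exact: Hbe.
      have hzd : forall k, lt (z k).1 d by move=> k; exact: ltT (proj1 (proj2 hzI) k) hb0.
      split; first by rewrite (L2 hds (I : decr lt nil) (Hxy _ hzd)).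
      rewrite (L2 (I : decr lt nil) du) //.
      by move=> e; subst y; apply: (I0_irr hz2).
    + move=> [[z t] [hc [h1 h2]]].
      have /HI [[_ dt] [hzd _]] : As d (z, t) by apply: As_mono hc; left.
      move: h1; rewrite (L2 hds dt (Hxy _ hzd)) => h1.
      case: (classic (z = y)) => [<-|nzy] //.
      move: h2; rewrite (L2 dt du nzy) => h2; exact: I0_trans h1 h2.
  have neg : forall b, As d b -> (I_lt lt b (x, s) <-> ~ I_lt lt (x, s) b).
    move=> [y u] /HI [[_ du] [hy hu]].
    rewrite (L2 hds du (Hxy _ hy)) (L2 du hds (fun e => Hxy _ hy (esym e))).
    split; first by move=> h1 h2; exact: I0_asym h1 h2.
    by move=> h; case: (I0_tri (Hxy _ hy)).
  apply: (no_split _ (Hs be hbe)) => b1 b2 hb1 hb2 hs.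
  have [_ Hd] := tp_facts hs.
  have E : I_lt lt (x, s) b1 <-> I_lt lt (x, s) b2.
    rewrite (key _ hb1) (key _ hb2); split => -[c [hc [h1 h2]]]; exists c; do 2!split => //;
      by have [E _] := Hd c hc; apply/E.
  split => //; split; first by rewrite (neg _ hb1) (neg _ hb2) E.
  by split => e; [case: (Hne _ hb1 e)|case: (Hne _ hb2 e)].
-
  have hx : forall n, lt (x n).1 d.
    by move=> n; apply: NNPP => h; apply: Hx; exists n.
  have [J [s' [es [hJ hs']]]] := decomp d hds; move: es => /= es.
  have hJn : J <> nil.
    move=> eJ; apply: Ha; split; first by split.
    by split => //; rewrite es eJ.
  have ha' : inI d (x, s').
    split; first by split => //; apply: (decr_suffix (J:=J)); rewrite -es.
    by split.
  have [be [hbe Hbe]] := (As_cont (x, s') hd).1 ((HI _).2 ha').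
  have [S1 S2] := strip x hs' hJ.
  have [S2a S2b] := S2 hJn.
  subst s.
  have R1 : forall b, As d b -> (I_lt lt (x, J ++ s') b <-> ((x, s') = b \/ I_lt lt (x, s') b)).
    move=> [y u] /HI [_ [_ hu]].
    case: (classic ((y, u) = (x, s'))) => [e|ne].
      by rewrite e; split => // _; left.
    have [A _] := S1 y u hu ne; rewrite A; split; [by right|case => // e; by case: ne].
  have R2 : forall b, As d b -> (I_lt lt b (x, J ++ s') <-> ((x, s') <> b /\ I_lt lt b (x, s'))).
    move=> [y u] /HI [_ [_ hu]].
    case: (classic ((y, u) = (x, s'))) => [e|ne].
      by rewrite e; split => // -[].
    have [_ B] := S1 y u hu ne; rewrite B; split; last by case.
    by split => // e; apply: ne.
  apply: (no_split _ (Hs be hbe)) => b1 b2 hb1 hb2 hs.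
  have [_ Hd] := tp_facts hs.
  have [D1 [D2 D3]] := Hd _ Hbe.
  rewrite (R1 _ hb1) (R1 _ hb2) (R2 _ hb1) (R2 _ hb2) D1 D2 D3.
  split => //; split => //.
  by split => e; [case: (Hne _ hb1 e)|case: (Hne _ hb2 e)].
Qed.


End Rep.

Lemma main_nice : nice lt (I_lt lt) (I_mem lt).
Proof.
move=> As HAs Hst.
have [d [hC hSp]] := Hst _ (@Cl_club As).
exact: (Cl_notSp HAs hC hSp).
Qed.

End Main.

Theorem mainTheorem13 (K : Type) (lt : K -> K -> Prop)
  (Hwo : strict_well_order lt)
  (Hcard : is_cardinal lt)
  (Hunc : uncountable K)
  (Hreg : regular lt)
  (Hpow : pow_lt_kappa_eq_kappa lt)
  (Hom : pow_omega_lt_kappa lt) :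
  nice lt (I_lt lt) (I_mem lt).
Proof. exact: main_nice. Qed.
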